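(* Let $q>10$ be a prime power. There exist $\alpha\in\mathbb{F}_{q^3}\setminus\mathbb{F}_q$ and an $\mathbb{F}_q$-linear functional $f:\mathbb{F}_{q^3}\to\mathbb{F}_q$ such that, with $\beta=1$: (1) $f(\alpha/\beta)\neq 1$, and (2) for all $k\in\mathbb{F}_q$, $k\neq f\left(\frac{\alpha^2}{\beta}\right)+\left(f\left(\frac{\beta^2}{\alpha+k}\right)+k\right)f\left(\frac{\alpha}{\beta}\right)+k f\left(\frac{\beta^2}{\alpha+k}\right)f\left(\frac{1}{\beta}\right)$. *)

(* Defs.v *)
From HB Require Import structures.
From mathcomp Require Export all_boot all_order all_algebra all_field.
Set Implicit Arguments. Unset Strict Implicit. Unset Printing Implicit Defensive.

(* Main.v *)
Require Import Defs.
From HB Require Import structures.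
From mathcomp Require Import all_boot all_order all_algebra all_field.
From mathcomp Require Import ring.
Import GRing.Theory.
Local Open Scope ring_scope.

Lemma exists_notin (T : finType) (s : seq T) : (size s < #|T|)%N -> exists x, x \notin s.
Proof.
move=> H; case: (pickP [pred x | x \notin s]) => [x Hx|H0]; first by exists x.
exfalso; have : (#|T| <= #|s|)%N.
  apply: subset_leq_card; apply/subsetP => x _; move: (H0 x) => /= /negbFE; done.
move=> H1; have := leq_trans H1 (card_size s); rewrite leqNgt H; done.
Qed.

Lemma not_inj_hole (T : finType) (h : T -> T) y1 y2 :
  y1 != y2 -> h y1 = h y2 -> exists v, forall y, h y != v.
Proof.
move=> ne eq12; case: (pickP [pred v | [forall y, h y != v]]) => [v /forallP Hv|H0].
  by exists v.
exfalso.
have Hs : forall v, exists y, h y == v.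
  move=> v; move: (H0 v) => /= /negbT; rewrite negb_forall => /existsP [y].
  by rewrite negbK => ?; exists y.
pose g v := xchoose (Hs v).
have gK : cancel g h by move=> v; apply/eqP; exact: (xchooseP (Hs v)).
have ginj : injective g := can_inj gK.
have [g' gg' g'g] := injF_bij ginj.
have hE : forall y, h y = g' y by move=> y; rewrite -{1}(g'g y) gK.
move: eq12; rewrite !hE => /(can_inj g'g) E; by rewrite E eqxx in ne.
Qed.

Lemma cubic_nonconst (F : finFieldType) (p1 p2 : F) : (3 < #|F|)%N ->
  exists y, y^+3 + p2 * y^+2 - p1 * y != 0.
Proof.
move=> HF; case: (pickP [pred y | y^+3 + p2 * y^+2 - p1 * y != 0]) => [y Hy|H0].
  by exists y.
exfalso.
pose p : {poly F} := \poly_(i < 4) [:: 0; -p1; p2; 1]`_i.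
have pn0 : p != 0.
  apply/eqP => /(congr1 (fun q : {poly F} => q`_3)); rewrite coef_poly /= coef0.
  by move/eqP; rewrite oner_eq0.
have Hr : all (root p) (enum F).
  apply/allP => y _; apply/rootP; rewrite horner_poly !big_ord_recr big_ord0 /=.
  move: (H0 y) => /= /negbFE /eqP H.
  transitivity (y^+3 + p2*y^+2 - p1*y); [ring | exact H].
have := max_poly_roots pn0 Hr (enum_uniq _).
rewrite -cardE => H; have := leq_trans H (size_poly _ _).
by rewrite ltnS leqNgt HF.
Qed.

Definition o1 : 'I_3 := Ordinal (isT : (1 < 3)%N).
Definition o2 : 'I_3 := Ordinal (isT : (2 < 3)%N).

Definition fcoord (F : fieldType) (L : vectType F) (X : 3.-tuple L) (a e : F)
  : L -> F^o := fun v => a * coord X o1 v + e * coord X o2 v.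

Fact fcoord_lin (F : fieldType) (L : vectType F) (X : 3.-tuple L) (a e : F) :
  forall c u v, @fcoord F L X a e (c *: u + v) = c * @fcoord F L X a e u + @fcoord F L X a e v.
Proof. move=> c u v; rewrite /fcoord !linearP /=; ring. Qed.

HB.instance Definition _ (F : fieldType) (L : vectType F) (X : 3.-tuple L) (a e : F) :=
  GRing.isLinear.Build F L F^o *:%R (@fcoord F L X a e) (@fcoord_lin F L X a e).


Arguments fcoord {F L} X a e _.
Section S.
Variables (F : finFieldType) (L : fieldExtType F).
Hypothesis Hdim : \dim {: L} = 3%N.

Lemma exg : exists2 g : L, g \in fullv & g \notin 1%VS.
Proof.
apply/subvPn; apply/negP => /dimvS; rewrite Hdim dimv1; done.
Qed.

Lemma deg3 (g : L) : g \notin 1%VS -> adjoin_degree 1%AS g = 3%N.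
Proof.
move=> g1.
have H1 := dim_Fadjoin 1%AS g.
rewrite dimv1 muln1 in H1.
have H2 : (\dim <<1%AS; g>>%AS %| \dim {:L}%AS)%N by apply: field_dimS; apply: subvf.
rewrite /= H1 Hdim in H2.
have H3 : adjoin_degree 1%AS g != 1%N by rewrite adjoin_deg_eq1.
move: H2 H3; rewrite /adjoin_degree.
case: ((\dim_1%AS <<1%AS; g>>).-1) => [|[|[|n]]] //.
Qed.

Lemma freeX (g : L) : g \notin 1%VS -> free [tuple (1:L); g; g^+2].
Proof.
move=> g1; apply/freeP => k Hk i.
pose p : {poly L} := \poly_(j < 3) (k (inord j))%:A.
have pO : p \is a polyOver 1%AS.
  by apply: polyOver_poly => j _; apply: memvZ; exact: mem1v.
have sp : (size p <= adjoin_degree 1%AS g)%N by rewrite deg3 // size_poly.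
have rp : root p g.
  apply/rootP; rewrite horner_poly -[RHS]Hk; apply: eq_bigr => j _.
  rewrite inord_val mulr_algl; congr (_ *: _).
  by case: j => [[|[|[|]]] ?].
move: rp; rewrite (root_small_adjoin_poly pO sp) => /eqP /(congr1 (fun q : {poly L} => q`_i)).
rewrite coef_poly ltn_ord inord_val coef0 => /eqP; rewrite scaler_eq0 oner_eq0 orbF.
by move/eqP.
Qed.

Lemma fcoordE (g : L) (a e c0 c1 c2 : F) : g \notin 1%VS ->
  fcoord [tuple 1; g; g^+2] a e (c0%:A + c1%:A * g + c2%:A * g^+2) = a*c1 + e*c2.
Proof.
move=> g1; have fX := freeX g g1.
have E01 : coord [tuple 1; g; g^+2] o1 1 = 0 by exact: (coord_free ord0 o1 fX).
have E02 : coord [tuple 1; g; g^+2] o2 1 = 0 by exact: (coord_free ord0 o2 fX).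
have E11 : coord [tuple 1; g; g^+2] o1 g = 1 by exact: (coord_free o1 o1 fX).
have E12 : coord [tuple 1; g; g^+2] o2 g = 0 by exact: (coord_free o1 o2 fX).
have E21 : coord [tuple 1; g; g^+2] o1 (g^+2) = 0 by exact: (coord_free o2 o1 fX).
have E22 : coord [tuple 1; g; g^+2] o2 (g^+2) = 1 by exact: (coord_free o2 o2 fX).
rewrite !mulr_algl /fcoord !linearD !linearZ /= E01 E02 E11 E12 E21 E22; ring.
Qed.

Lemma relg (g : L) : g \notin 1%VS ->
  exists p0 p1 p2 : F, g^+3 = p0%:A + p1%:A * g + p2%:A * g^+2.
Proof.
move=> g1; have fX := freeX g g1.
have sp : span [tuple 1;g;g^+2] = fullv.
  apply/eqP; rewrite eqEdim subvf /= Hdim (eqP fX); done.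
have := @coord_span _ _ _ [tuple 1; g; g^+2] (g^+3); rewrite sp memvf => /(_ isT) H.
exists (coord [tuple 1; g; g^+2] ord0 (g^+3)), (coord [tuple 1; g; g^+2] o1 (g^+3)),
  (coord [tuple 1; g; g^+2] o2 (g^+3)).
rewrite {1}H !big_ord_recl big_ord0 addr0 !mulr_algl addrA.
have -> : lift ord0 ord0 = o1 :> 'I_3 by apply: val_inj.
have -> : lift ord0 (lift ord0 ord0) = o2 :> 'I_3 by apply: val_inj.
by [].
Qed.
End S.

Lemma hcoll (F0 : fieldType) (A a D1 D2 y2 : F0) : A != 0 -> D2 - D1 != 0 ->
  (0 - y2 * (A*D2 + a^+2)/(A*(D2 - D1))) * (A*D1 + a^+2)
  = (y2 - y2 * (A*D2 + a^+2)/(A*(D2 - D1))) * (A*D2 + a^+2).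
Proof. move=> HA HD; field. by rewrite HA HD. Qed.

Lemma hxw_id (F : fieldType) (L : fieldExtType F) (g : L) (p0 p1 p2 t : F) :
  g^+3 = p0%:A + p1%:A*g + p2%:A*g^+2 ->
  (g + t%:A) * ((-p1 + p2*t + t^+2)%:A + (-p2 - t)%:A * g + 1%:A * g^+2)
  = (t^+3 + p2*t^+2 - p1*t + p0)%:A.
Proof.
move=> Hrel; apply/eqP; rewrite -subr_eq0; apply/eqP.
transitivity (g^+3 - (p0%:A + p1%:A * g + p2%:A * g^+2)); last by rewrite -Hrel subrr.
rewrite -!in_algE !rmorphD !rmorphN !rmorphM ?rmorphXn ?rmorph1; ring.
Qed.

Lemma key_id (F : fieldType) (a p2 v z Dy k A s e y : F) :
  a != 0 -> 1 + a != 0 -> Dy != 0 -> A = 1 - a ->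
  s = (- v - a * z * (2 * a - 1) - a ^+ 2 * p2) / (a * (1 + a)) ->
  e = A * z - s * (1 + a) -> y = s + k ->
  (y - z) * (A * Dy + a^+2) - v = Dy * (k - (a * (s + s) + e * 1
     + (Dy^-1 * (a * (- p2 - y) + e * 1) + k) * a
     + k * (Dy^-1 * (a * (- p2 - y) + e * 1)) * 0)).
Proof.
move=> a0 a1 D0 -> -> -> ->; field.
by rewrite D0 a0 a1.
Qed.

Theorem proposition4p6 (F : finFieldType) (L : fieldExtType F) :
  (10 < #|F|)%N -> \dim {: L} = 3%N ->
  exists alpha : L, alpha \notin 1%VS /\
  exists f : {linear L -> F^o},
    let beta : L := 1 in
    f (alpha / beta) != 1 /\
    forall k : F,
      k != f (alpha ^+ 2 / beta)
           + (f (beta ^+ 2 / (alpha + k%:A)) + k) * f (alpha / beta)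
           + k * f (beta ^+ 2 / (alpha + k%:A)) * f (beta^-1).
Proof.
move=> HF Hdim.
have [g _ g1] := @exg _ _ Hdim.
have [p0 [p1 [p2 Hrel]]] := @relg _ _ Hdim g g1.
have fE := @fcoordE _ _ Hdim.
have [a Ha] : exists a : F, a \notin [:: 0; 1; -1].
  by apply: exists_notin; apply: ltn_trans HF.
move: Ha; rewrite !inE !negb_or => /and3P [a0 a1 am1].
have [y2 Hy2] := @cubic_nonconst _ p1 p2 (ltn_trans (isT : (3 < 10)%N) HF).
pose D y := y^+3 + p2 * y^+2 - p1 * y + p0.
pose A := 1 - a.
have A0 : A != 0 by rewrite subr_eq0 eq_sym.
have Dd : D y2 - D 0 != 0.
  have -> : D y2 - D 0 = y2^+3 + p2*y2^+2 - p1*y2 by rewrite /D; ring.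
  exact: Hy2.
pose z := y2 * (A * D y2 + a^+2) / (A * (D y2 - D 0)).
pose h y := (y - z) * (A * D y + a^+2).
have y20 : (0:F) != y2.
  apply: contra Hy2 => /eqP <-; apply/eqP; ring.
have hh : h 0 = h y2 by exact: hcoll.
have [v Hv] := @not_inj_hole _ h _ _ y20 hh.
pose s := (- v - a * z * (2 * a - 1) - a^+2 * p2) / (a * (1 + a)).
pose e := A * z - s * (1 + a).
exists (g + s%:A); split.
  apply: contra g1 => H.
  have -> : g = (g + s%:A) - s%:A by rewrite addrK.
  by apply: memvB H _; apply: memvZ; exact: mem1v.
pose f : {linear L -> F^o} := fcoord [tuple 1; g; g^+2] a e.
have fE' : forall c0 c1 c2, f (c0%:A + c1%:A * g + c2%:A * g^+2) = a * c1 + e * c2.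
  by move=> c0 c1 c2; exact: (fE g a e c0 c1 c2 g1).
exists f.
cbv zeta.
have F1 : f 1 = 0.
  have := fE' 1 0 0; rewrite !scale0r !mul0r !addr0 scale1r => ->; ring.
have Fal : f (g + s%:A) = a.
  have := fE' s 1 0; rewrite scale0r mul0r addr0 scale1r mul1r => E.
  by rewrite addrC E; ring.
have Fal2 : f ((g + s%:A)^+2) = a * (s + s) + e * 1.
  rewrite (_ : (g + s%:A)^+2 = (s*s)%:A + (s + s)%:A * g + 1%:A * g^+2); first by rewrite fE'.
  rewrite -!in_algE !rmorphD !rmorphM rmorph1; ring.
rewrite !divr1 Fal; split; first by [].
move=> k.
pose y := s + k.
pose w : L := (-p1 + p2*y + y^+2)%:A + (-p2 - y)%:A * g + 1%:A * g^+2.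
have Hxw : (g + s%:A + k%:A) * w = (D y)%:A.
  by rewrite -addrA -scalerDl; exact: hxw_id.
have Dn : D y != 0.
  apply/negP => /eqP D0; move: Hxw; rewrite D0 scale0r => /eqP; rewrite mulf_eq0 => /orP [x0|w0].
    move/eqP: x0 => x0; move/negP: g1; apply.
    have -> : g = - (s%:A + k%:A) by apply/eqP; rewrite -subr_eq0 opprK addrA x0.
    by rewrite memvN memvD // memvZ // mem1v.
  have := fE g 0 1 (-p1 + p2*y + y^+2) (-p2 - y) 1 g1.
  by rewrite -/w (eqP w0) linear0 => /esym/eqP; rewrite mul0r mul1r add0r oner_eq0.
have Inv : (g + s%:A + k%:A)^-1 = (D y)^-1 *: w.
  by apply: mulr1_eq; rewrite -scalerAr Hxw scalerA mulVf // scale1r.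
rewrite expr1n mul1r invr1 F1 Inv linearZ /= /w fE' Fal2.
change (k != a * (s + s) + e * 1 + ((D y)^-1 * (a * (- p2 - y) + e * 1) + k) * a
   + k * ((D y)^-1 * (a * (- p2 - y) + e * 1)) * 0).
have a1' : 1 + a != 0 by rewrite addrC -[1]opprK subr_eq0.
apply/eqP => Hk.
have := @key_id _ a p2 v z (D y) k A s e y a0 a1' Dn erefl erefl erefl erefl.
rewrite -Hk subrr mulr0 => /eqP; rewrite subr_eq0 => hy.
by move: (Hv y); rewrite /h hy.
Qed.
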